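(* Let $\mu \in X^*(\underline{T})$ be a character. We have: \begin{align*} \mathrm{Trns}_\mu\big(\Lambda_W^\mu\times\mathcal{A}\big)= \left\{ \begin{aligned} \lambda\in X_1(\underline{T})/(p-\pi)X^0(\underline{T})&\quad\text{such that $\lambda$ is $p$-regular and}\\ &\quad(\lambda-\mu+\eta)|_{\underline{Z}}\in(p-\pi)X^*(\underline{Z}) \end{aligned} \right\} \end{align*}
   Context: Let $\underline{G}=(\mathrm{Res}_{\mathbb{F}_{p^f}/\mathbb{F}_p}\mathrm{GL}_3)\times\mathbb{F}\cong\mathrm{GL}_3^f$ with diagonal torus $\underline T$ and center $\underline Z$, $X^*(\underline T)\cong(\mathbb{Z}^3)^f$, $X_1(\underline T)$ the $p$-restricted dominant weights, $\eta=((1,0,-1))_i$, $\pi$ the Frobenius shift $(\pi\lambda)_i=\lambda_{i-1}$. Let $\Lambda_W\supset\Lambda_R$ be the weight and root lattices of $\mathrm{SL}_3^f$, $\lambda\mapsto\overline\lambda$ restriction $X^*(\underline T)\to\Lambda_W$ with kernel $X^0(\underline T)$, $\mathrm{can}$ the canonical identification of $\Lambda_R$ with the characters of $\underline T$ trivial on $\underline Z$, $\mathrm{sec}:\Lambda_W\to X^*(\underline T)$ a section. With the $p$-dot action $t_\lambda w\cdot\mu=p\lambda+w(\mu+\eta)-\eta$, let $\underline A$ be the lowest dominant $p$-restricted alcove, $\mathcal A=\{A,B\}^f$ the dominant $p$-restricted alcoves, $\widetilde{\underline W}^{+,\mathrm{der}}_1$ the elements $wt_{-\pi^{-1}\omega}$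 of $\Lambda_W\rtimes S_3^f$ taking $\underline A$ into $\mathcal A$. Writing uniquely elements of $\Lambda_W\times\mathcal A$ as $(\omega+\nu,\pi wt_{-\pi^{-1}\omega}\cdot\underline A)$, $\nu\in\Lambda_R$, define $\mathrm{Trns}_\mu(\omega+\nu,\pi wt_{-\pi^{-1}\omega}\cdot\underline A)=wt_{-\pi^{-1}\mathrm{sec}(\omega)}\cdot(\mu-\eta+\mathrm{can}(\nu)+\mathrm{sec}(\omega))$ modulo $(p-\pi)X^0(\underline T)$, and $\Lambda_W^\mu=\{\omega\in\Lambda_W:\omega+\overline{\mu-\eta}\in\underline A\}$. A weight $\lambda$ is $p$-regular if $\langle\lambda+\eta,\alpha^\vee\rangle\notin p\mathbb Z$ for all positive roots $\alpha$. *)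

(* Defs.v *)
From HB Require Import structures.
From mathcomp Require Import all_boot all_order all_algebra all_fingroup.
Set Implicit Arguments. Unset Strict Implicit. Unset Printing Implicit Defensive.
Import Order.TTheory GRing.Theory Num.Theory.
Local Open Scope ring_scope.

(* Conventions (G = GL_3^f, embeddings indexed by 'I_f, coordinates by 'I_3):
   X^*(T) = 'M[int]_(f,3) (row i = the i-th copy of Z^3).
   X^*(T) (x) Q = 'M[rat]_(f,3); Lambda_W (x) Q is identified with the
   row-sum-zero rational matrices via the orthogonal projection [proj];
   Lambda_W = image of X^*(T) under [proj]; Lambda_R = integer row-sum-zero
   matrices, and [can] is then the identity (inclusion into X^*(T)). *)

Definition c0 : 'I_3 := @Ordinal 3 0 isT.
Definition c1 : 'I_3 := @Ordinal 3 1 isT.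
Definition c2 : 'I_3 := @Ordinal 3 2 isT.

Section Defs.
Variable f : nat.

Definition piM (R : Type) n (x : 'M[R]_(f, n)) : 'M[R]_(f, n) :=
  \matrix_(i, j) x (ord_pred i) j.
Definition piinvM (R : Type) n (x : 'M[R]_(f, n)) : 'M[R]_(f, n) :=
  \matrix_(i, j) x (ordS i) j.

Definition eta (R : pzRingType) : 'M[R]_(f, 3) :=
  \matrix_(i, j) (1 - (j : nat)%:R).

Definition wact (R : Type) (w : 'I_f -> 'S_3) (x : 'M[R]_(f, 3)) : 'M[R]_(f, 3) :=
  \matrix_(i, j) x i ((w i)^-1%g j).

Definition dot (R : pzRingType) (p : nat) (w : 'I_f -> 'S_3) (nu x : 'M[R]_(f, 3)) :
  'M[R]_(f, 3) :=
  wact w (p%:R *: nu + x + eta R) - eta R.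

Definition inQ (l : 'M[int]_(f, 3)) : 'M[rat]_(f, 3) := map_mx (fun z => z%:~R) l.

Definition proj (x : 'M[rat]_(f, 3)) : 'M[rat]_(f, 3) :=
  \matrix_(i, j) (x i j - (x i c0 + x i c1 + x i c2) / 3%:R).

Definition overline (l : 'M[int]_(f, 3)) : 'M[rat]_(f, 3) := proj (inQ l).

Definition inLW (om : 'M[rat]_(f, 3)) : Prop := exists l, overline l = om.

(* integral characters trivial on Z (= can(Lambda_R)) *)
Definition sumzero (nu : 'M[int]_(f, 3)) : Prop :=
  forall i, nu i c0 + nu i c1 + nu i c2 = 0.

Definition inX0 (c : 'M[int]_(f, 3)) : Prop :=
  forall i, c i c0 = c i c1 /\ c i c1 = c i c2.

Definition congr (p : nat) (l l' : 'M[int]_(f, 3)) : Prop :=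
  exists c, inX0 c /\ l - l' = p%:R *: c - piM c.

(* the two p-restricted alcoves of GL_3 *)
Inductive Alc := AlcA | AlcB.

Definition inAlc (p : nat) (C : 'I_f -> Alc) (x : 'M[rat]_(f, 3)) : Prop :=
  forall i,
    let a := x i c0 - x i c1 + 1 in
    let b := x i c1 - x i c2 + 1 in
    match C i with
    | AlcA => [/\ 0 < a, 0 < b & a + b < p%:R]
    | AlcB => [/\ a < p%:R, b < p%:R & p%:R < a + b]
    end.

Definition lowA : 'I_f -> Alc := fun _ => AlcA.

Definition piAlc (C : 'I_f -> Alc) : 'I_f -> Alc := fun i => C (ord_pred i).

Definition maps_onto (p : nat) (w : 'I_f -> 'S_3) (om : 'M[rat]_(f, 3))
    (C : 'I_f -> Alc) : Prop :=
  forall x, inAlc p lowA x <-> inAlc p C (dot p w (- piinvM om) x).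

Definition inLWmu (p : nat) (mu : 'M[int]_(f, 3)) (om : 'M[rat]_(f, 3)) : Prop :=
  inLW om /\ inAlc p lowA (om + overline (mu - eta int)).

(* Trns_mu(om', A') is the class of l modulo (p - pi) X^0(T):
   (om', A') = (om + nu, pi (w t_{-pi^{-1} om} . A)) with nu in Lambda_R and
   w t_{-pi^{-1} om} in W~^{+,der}_1 (i.e. it maps A to an alcove C of the
   set {A,B}^f), and l == w t_{-pi^{-1} sec(om)} . (mu - eta + can(nu) + sec(om)). *)
Definition Trns (p : nat) (mu : 'M[int]_(f, 3)) (sec : 'M[rat]_(f, 3) -> 'M[int]_(f, 3))
    (om' : 'M[rat]_(f, 3)) (A' : 'I_f -> Alc) (l : 'M[int]_(f, 3)) : Prop :=
  exists (om : 'M[rat]_(f, 3)) (nu : 'M[int]_(f, 3)) (w : 'I_f -> 'S_3) (C : 'I_f -> Alc),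
    [/\ inLW om /\ sumzero nu, om' = om + inQ nu,
        maps_onto p w om C, A' = piAlc C &
        congr p l (dot p w (- piinvM (sec om)) (mu - eta int + nu + sec om))].

Definition X1 (p : nat) (l : 'M[int]_(f, 3)) : Prop :=
  forall i, (0 <= l i c0 - l i c1 <= p%:Z - 1) /\ (0 <= l i c1 - l i c2 <= p%:Z - 1).

Definition pregular (p : nat) (l : 'M[int]_(f, 3)) : Prop :=
  forall i, [/\ ~~ (p%:Z %| l i c0 - l i c1 + 1)%Z,
               ~~ (p%:Z %| l i c1 - l i c2 + 1)%Z &
               ~~ (p%:Z %| l i c0 - l i c2 + 2)%Z].

(* restriction X^*(T) -> X^*(Z) = Z^f *)
Definition resZ (l : 'M[int]_(f, 3)) : 'M[int]_(f, 1) :=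
  \matrix_(i, j) (l i c0 + l i c1 + l i c2).

Definition central (p : nat) (mu l : 'M[int]_(f, 3)) : Prop :=
  exists z : 'M[int]_(f, 1), resZ (l - mu + eta int) = p%:R *: z - piM z.

End Defs.

(* Main.v *)
Require Import Defs.
From HB Require Import structures.
From mathcomp Require Import all_boot all_order all_algebra all_fingroup.
From mathcomp Require Import ring lra zify.
Set Implicit Arguments. Unset Strict Implicit. Unset Printing Implicit Defensive.
Import Order.TTheory GRing.Theory Num.Theory.
Local Open Scope ring_scope.

Definition rowAlc (p : nat) (c : Alc) (x : 'I_3 -> rat) : Prop :=
  let a := x c0 - x c1 + 1 in
  let b := x c1 - x c2 + 1 in
  match c with
  | AlcA => [/\ 0 < a, 0 < b & a + b < p%:R]
  | AlcB => [/\ a < p%:R, b < p%:R & p%:R < a + b]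
  end.

Lemma inAlcE p f (C : 'I_f -> Alc) X : inAlc p C X <-> forall i, rowAlc p (C i) (fun j => X i j).
Proof. by []. Qed.

Definition sigp (kk : int) (c : Alc) : 'S_3 :=
 if kk == 0 then (match c with AlcA => 1%g | AlcB => tperm c0 c2 end)
 else if kk == 1 then (match c with AlcA => (tperm c0 c1 * tperm c1 c2)%g | AlcB => tperm c0 c1 end)
 else (match c with AlcA => (tperm c1 c2 * tperm c0 c1)%g | AlcB => tperm c1 c2 end).

Definition trip (a b c : int) (j : 'I_3) : int :=
  if j == c0 then a else if j == c1 then b else c.

Definition trow (kk : int) (c : Alc) : 'I_3 -> int :=
 if kk == 0 then (match c with AlcA => trip 0 0 0 | AlcB => trip 1 0 (-1) end)
 else if kk == 1 then (match c with AlcA => trip 0 0 (-1) | AlcB => trip 0 (-1) 0 end)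
 else (match c with AlcA => trip 0 (-1) (-1) | AlcB => trip (-1) 0 (-1) end).

Definition etaq (j : 'I_3) : rat := 1 - (j : nat)%:R.

Definition Tq kk c (j : 'I_3) : rat :=
  (trow kk c j)%:~R - ((trow kk c c0 + trow kk c c1 + trow kk c c2)%:~R) / 3%:R.

Lemma row_lemma (p : nat) (c : Alc) (kk : int) (x y : 'I_3 -> rat) :
  (kk = 0 \/ kk = 1 \/ kk = 2) ->
  (forall j, y j = - p%:R * Tq kk c (sigp kk c j) + x (sigp kk c j) + etaq (sigp kk c j) - etaq j) ->
  rowAlc p AlcA x <-> rowAlc p c y.
Proof.
move=> hk hy; rewrite /rowAlc !hy /Tq /etaq {hy}.
case: hk => [->|[->|->]]; case: c => /=;
  rewrite ?permM !permE /= /trow /trip /= /intmul /= ?mulr0n ?mulr1n.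
all: split=> -[H1 H2 H3]; split; lra.
Qed.

Lemma castnat (n : nat) : ((n%:R : int)%:~R : rat) = n%:R.
Proof. by rewrite natz. Qed.

Lemma eta_cast f i j : ((Defs.eta f int) i j)%:~R = (Defs.eta f rat) i j.
Proof. by rewrite !mxE intrB castnat. Qed.

Lemma sum3 (R : nmodType) (F : 'I_3 -> R) : \sum_j F j = F c0 + F c1 + F c2.
Proof.
rewrite !big_ord_recl big_ord0 addr0 addrA.
by congr (F _ + F _ + F _); apply: val_inj.
Qed.

Lemma sum3perm (R : nmodType) (s : 'S_3) (F : 'I_3 -> R) :
  F (s c0) + F (s c1) + F (s c2) = F c0 + F c1 + F c2.
Proof.
rewrite -sum3 -(sum3 (fun j => F (s j))).
by rewrite [RHS](reindex_inj (@perm_inj _ s)).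
Qed.

Definition rowc f (X Y : 'M[rat]_(f, 3)) := forall i j, X i j - Y i j = X i c0 - Y i c0.

Lemma inAlc_rowc p f (C : 'I_f -> Alc) X Y : rowc X Y -> inAlc p C Y -> inAlc p C X.
Proof.
move=> h H i; move: (H i) => /=.
have h1 := h i c1; have h2 := h i c2.
by case: (C i) => -[H1 H2 H3]; split; lra.
Qed.

Lemma rowc_dot p f (w : 'I_f -> 'S_3) a x b y :
  rowc (p%:R *: a + x + Defs.eta f rat) (p%:R *: b + y + Defs.eta f rat) ->
  rowc (dot p w a x) (dot p w b y).
Proof.
move=> h i j; rewrite /dot !mxE.
have h1 := h i ((w i)^-1%g j); have h2 := h i ((w i)^-1%g c0).
move: h1 h2; rewrite !mxE => h1 h2; lra.
Qed.

Lemma inQ_dot p f (w : 'I_f -> 'S_3) a x :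
  inQ (dot p w a x) = dot p w (inQ a) (inQ x).
Proof.
apply/matrixP => i j; rewrite /dot /inQ !mxE.
by rewrite intrB !intrD intrM !intrN !castnat mulr1z.
Qed.

Lemma rowAlcZ p c (g : 'I_3 -> int) :
  rowAlc p c (fun j => (g j)%:~R) ->
  ((0 <= g c0 - g c1 <= p%:Z - 1) /\ (0 <= g c1 - g c2 <= p%:Z - 1)) /\
  [/\ ~~ (p%:Z %| g c0 - g c1 + 1)%Z, ~~ (p%:Z %| g c1 - g c2 + 1)%Z &
      ~~ (p%:Z %| g c0 - g c2 + 2)%Z].
Proof.
rewrite /rowAlc.
have E1 : (g c0)%:~R - (g c1)%:~R + 1 = ((g c0 - g c1 + 1)%:~R : rat) by rewrite intrD intrB.
have E2 : (g c1)%:~R - (g c2)%:~R + 1 = ((g c1 - g c2 + 1)%:~R : rat) by rewrite intrD intrB.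
have Ep : (p%:R : rat) = (p%:Z)%:~R by [].
rewrite E1 E2 Ep -intrD !ltr_int ?ltr0z.
have nd : forall a : int, (0 < a < p%:Z) || (p%:Z < a < 2 * p%:Z) -> ~~ (p%:Z %| a)%Z.
  move=> a ha; apply/negP => /dvdzP [q hq]; rewrite hq in ha.
  have hp : (0 <= p%:Z) by [].
  have [hq1|hq1] : (q <= 0) \/ (1 <= q <= 1) \/ (2 <= q) by lia.
    by case/orP: ha; nia.
  by case: hq1 => hq1; case/orP: ha; nia.
case: c => -[H1 H2 H3]; (split; first by split; lia).
  by split; apply: nd; apply/orP; left; lia.
by split; apply: nd; [apply/orP; left | apply/orP; left | apply/orP; right]; lia.
Qed.

Lemma rowAlcZ_inv p (g : 'I_3 -> int) :
  ((0 <= g c0 - g c1 <= p%:Z - 1) /\ (0 <= g c1 - g c2 <= p%:Z - 1)) ->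
  [/\ ~~ (p%:Z %| g c0 - g c1 + 1)%Z, ~~ (p%:Z %| g c1 - g c2 + 1)%Z &
      ~~ (p%:Z %| g c0 - g c2 + 2)%Z] ->
  rowAlc p (if g c0 - g c2 + 2 < p%:Z then AlcA else AlcB) (fun j => (g j)%:~R).
Proof.
move=> [Ha Hb] [N1 N2 N3].
have E1 : (g c0)%:~R - (g c1)%:~R + 1 = ((g c0 - g c1 + 1)%:~R : rat) by rewrite intrD intrB.
have E2 : (g c1)%:~R - (g c2)%:~R + 1 = ((g c1 - g c2 + 1)%:~R : rat) by rewrite intrD intrB.
have Ep : (p%:R : rat) = (p%:Z)%:~R by [].
have ne : forall a : int, ~~ (p%:Z %| a)%Z -> a != p%:Z.
  by move=> a na; apply: contraNneq na => ->; apply: dvdzz.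
have n1 := ne _ N1; have n2 := ne _ N2; have n3 := ne _ N3.
case: ifP => hs; rewrite /rowAlc /= E1 E2 Ep -intrD !ltr_int ?ltr0z; split; lia.
Qed.

Lemma rsum_wact f (w : 'I_f -> 'S_3) (X : 'M[int]_(f,3)) i :
  wact w X i c0 + wact w X i c1 + wact w X i c2 = X i c0 + X i c1 + X i c2.
Proof. by rewrite !mxE; exact: (sum3perm ((w i)^-1%g) (fun c => X i c)). Qed.

Lemma rsum_dot p f (w : 'I_f -> 'S_3) (a x : 'M[int]_(f,3)) i :
  let V := p%:R *: a + x + Defs.eta f int in
  dot p w a x i c0 + dot p w a x i c1 + dot p w a x i c2 = V i c0 + V i c1 + V i c2.
Proof.
move=> V; rewrite /dot.
have h c : (wact w V - Defs.eta f int) i c = wact w V i c - Defs.eta f int i c by rewrite !mxE.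
rewrite !h; have := rsum_wact w V i; rewrite !mxE /=; lia.
Qed.

Lemma rsum_dot2 p f (w : 'I_f -> 'S_3) (a x : 'M[int]_(f,3)) i :
  dot p w a x i c0 + dot p w a x i c1 + dot p w a x i c2 =
  p%:R * (a i c0 + a i c1 + a i c2) + (x i c0 + x i c1 + x i c2).
Proof. rewrite rsum_dot /= !mxE /=; ring. Qed.

Lemma dir1 p f (mu : 'M[int]_(f, 3)) (sec : 'M[rat]_(f, 3) -> 'M[int]_(f, 3)) :
  (forall om, inLW om -> overline (sec om) = om) ->
  forall l : 'M[int]_(f, 3),
    (exists (om' : 'M[rat]_(f, 3)) (A' : 'I_f -> Alc),
        inLWmu p mu om' /\ Trns p mu sec om' A' l) ->
    (exists l1, [/\ congr p l l1, X1 p l1, pregular p l1 & central p mu l1]).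
Proof.
move=> Hsec l [om' [A' [[_ Hx] [om [nu [w [C [[Hom Hnu] Heq HC _ Hcong]]]]]]]].
set s := sec om.
have Hs : overline s = om := Hsec om Hom.
set l1 := dot p w (- piinvM s) (mu - Defs.eta f int + nu + s).
exists l1.
have HCl : inAlc p C (inQ l1).
  have H1 := (HC _).1 Hx.
  apply: (inAlc_rowc _ H1); rewrite /l1 inQ_dot; apply: rowc_dot.
  move=> i j; rewrite Heq -Hs !mxE.
  by rewrite !(intrD, intrB, intrN, castnat, mulr1z); ring.
have HR : forall i, rowAlc p (C i) (fun j => (l1 i j)%:~R).
  by move=> i; move: (HCl i); rewrite /rowAlc /inQ !mxE.
split.
- exact: Hcong.
- by move=> i; case: (rowAlcZ (HR i)).
- by move=> i; case: (rowAlcZ (HR i)).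
exists (\matrix_(i, j) - (s (ordS i) c0 + s (ordS i) c1 + s (ordS i) c2)).
have H := rsum_dot2 p w (- piinvM s) (mu - Defs.eta f int + nu + s).
rewrite -/l1 in H; clear HR HCl Hcong; move: l1 H => l1 H.
apply/matrixP => i j; rewrite /resZ !mxE ord_predK.
transitivity ((l1 i c0 + l1 i c1 + l1 i c2) - (mu i c0 + mu i c1 + mu i c2)).
  by rewrite /=; ring.
rewrite H !mxE /=.
have hn : nu i c2 = - nu i c0 - nu i c1 by have := Hnu i; move/eqP; rewrite addrC addr_eq0 => /eqP ->; ring.
rewrite hn; ring.
Qed.

Lemma trow_sum kk c : (kk = 0 \/ kk = 1 \/ kk = 2) ->
  trow kk c c0 + trow kk c c1 + trow kk c c2 = - kk.
Proof. by case=> [->|[->|->]]; case: c. Qed.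

Lemma overline_add f (a nu : 'M[int]_(f,3)) : sumzero nu ->
  overline (a + nu) = overline a + inQ nu.
Proof.
move=> h; apply/matrixP => i j; rewrite /overline /proj /inQ !mxE.
have hn : nu i c2 = - nu i c0 - nu i c1.
  by have := h i; move/eqP; rewrite addrC addr_eq0 => /eqP ->; ring.
rewrite hn !(intrD, intrB, intrN); ring.
Qed.

Lemma overline_diff f (a b : 'M[int]_(f,3)) : overline a = overline b ->
  forall i j, a i j - b i j = a i c0 - b i c0.
Proof.
move=> h i j.
have h1 := congr1 (fun M : 'M[rat]_(f,3) => M i j) h; have h2 := congr1 (fun M : 'M[rat]_(f,3) => M i c0) h.
move: h1 h2; rewrite /overline /proj /inQ !mxE => h1 h2.
apply/eqP; rewrite -(eqr_int rat) !intrB; apply/eqP; lra.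
Qed.

Lemma dir2 p f (mu : 'M[int]_(f, 3)) (sec : 'M[rat]_(f, 3) -> 'M[int]_(f, 3)) :
  (forall om, inLW om -> overline (sec om) = om) ->
  forall l : 'M[int]_(f, 3),
    (exists l1, [/\ congr p l l1, X1 p l1, pregular p l1 & central p mu l1]) ->
    (exists (om' : 'M[rat]_(f, 3)) (A' : 'I_f -> Alc),
        inLWmu p mu om' /\ Trns p mu sec om' A' l).
Proof.
move=> Hsec l [l1 [[cc [Hcc Hl]] HX Hreg [z Hz]]].
pose kf i := ((z i ord0) %% 3)%Z.
pose mf i := ((z i ord0) %/ 3)%Z.
have Hk : forall i, kf i = 0 \/ kf i = 1 \/ kf i = 2.
  move=> i; have := @modz_ge0 (z i ord0) 3 isT; have := @ltz_pmod (z i ord0) 3 isT.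
  rewrite -/(kf i); lia.
have Hz' : forall i, z i ord0 = mf i * 3 + kf i := fun i => divz_eq _ _.
pose C i := if l1 i c0 - l1 i c2 + 2 < p%:Z then AlcA else AlcB.
have HC1 : forall i, rowAlc p (C i) (fun j => (l1 i j)%:~R).
  by move=> i; apply: rowAlcZ_inv; [exact: HX | exact: Hreg].
pose t := \matrix_(i, j) trow (kf i) (C i) j.
pose w i := ((sigp (kf i) (C i))^-1)%g.
pose om := overline (piM t).
have Hom : inLW om by exists (piM t).
pose s := sec om.
have Hs : overline s = om := Hsec om Hom.
have [kap Hkap] : exists kap : 'I_f -> int, forall i j, s i j = piM t i j + kap i.
  exists (fun i => s i c0 - piM t i c0) => i j; have := overline_diff Hs i j; lia.
pose W := wact (fun i => (w i)^-1)%g (l1 + Defs.eta f int).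
have HW : forall i j, W i ((w i)^-1%g j) = l1 i j + Defs.eta f int i j.
  by move=> i j; rewrite /W mxE invgK permKV mxE.
pose q i := p%:R * mf i - mf (ord_pred i).
pose nu := \matrix_(i, j) (W i j - mu i j - piM t i j + p%:R * t i j - q i).
have Hnu : sumzero nu.
  move=> i; rewrite /nu !mxE.
  have HWs := sum3perm (w i) (fun c => (l1 + Defs.eta f int) i c).
  have Ez := congr1 (fun M : 'M[int]_(f,1) => M i ord0) Hz.
  have T1 := trow_sum (C i) (Hk i); have T2 := trow_sum (C (ord_pred i)) (Hk (ord_pred i)).
  have Z1 := Hz' i; have Z2 := Hz' (ord_pred i).
  move: HWs Ez; rewrite /W /resZ /q !mxE /= => HWs Ez.
  rewrite invgK Z1 Z2 in Ez *.
  transitivity ((l1 i (w i c0) + (1 - (w i c0)%:R) + (l1 i (w i Defs.c1) + (1 - (w i Defs.c1)%:R)) + (l1 i (w i c2) + (1 - (w i c2)%:R)))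
   - (mu i c0 + mu i Defs.c1 + mu i c2)
   - (trow (kf (ord_pred i)) (C (ord_pred i)) c0 + trow (kf (ord_pred i)) (C (ord_pred i)) Defs.c1 + trow (kf (ord_pred i)) (C (ord_pred i)) c2)
   + p%:R * (trow (kf i) (C i) c0 + trow (kf i) (C i) Defs.c1 + trow (kf i) (C i) c2) - 3 * (p%:R * mf i - mf (ord_pred i))).
    by ring.
  rewrite HWs T1 T2.
  lia.
have HM : maps_onto p w om C.
  move=> x.
  have Hy : forall i j, dot p w (- piinvM om) x i j =
     - p%:R * Tq (kf i) (C i) (sigp (kf i) (C i) j) + x i (sigp (kf i) (C i) j)
     + etaq (sigp (kf i) (C i) j) - etaq j.
    move=> i j; rewrite /dot /om /w /Tq /etaq !mxE invgK ordSK.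
    rewrite !intrD; ring.
  split => H i.
    exact: ((row_lemma (x := fun j => x i j) (y := fun j => dot p w (- piinvM om) x i j) (Hk i) (Hy i)).1 (H i)).
  exact: ((row_lemma (x := fun j => x i j) (y := fun j => dot p w (- piinvM om) x i j) (Hk i) (Hy i)).2 (H i)).
have El1 : l1 = dot p w 0 (W - Defs.eta f int).
  apply/matrixP => i j; rewrite /dot /W !mxE invgK permKV; ring.
exists (om + inQ nu), (piAlc C); split.
  split; first by exists (piM t + nu); rewrite overline_add.
  apply/(HM _).2; apply: (inAlc_rowc (Y := inQ l1)).
    rewrite El1 inQ_dot; apply: rowc_dot => i j.
    rewrite /om /nu /q !mxE ordSK.
    by rewrite !(intrD, intrB, intrN, intrM, castnat, mulr1z, mulr0z); ring.
  move=> i; have := HC1 i; rewrite /rowAlc /= /inQ !mxE; exact.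
exists om, nu, w, C; split => //.
exists (cc + \matrix_(i, j) (kap (ordS i) + mf i)); split.
  by move=> i; rewrite !mxE; have [h1 h2] := Hcc i; rewrite h1 h2.
apply/matrixP => i j.
have := congr1 (fun M : 'M[int]_(f,3) => M i j) Hl; rewrite !mxE => Hlij.
rewrite /dot /nu /q !Hkap !mxE ordSK ord_predK.
have Hww : ((w i)^-1^-1)%g ((w i)^-1%g j) = j by rewrite invgK permKV.
rewrite Hww.
have Hl' : l i j = l1 i j + (p%:R * cc i j - cc (ord_pred i) j).
  by rewrite -Hlij; ring.
rewrite Hl'; ring.
Qed.

Unset Implicit Arguments.

Theorem proposition2p6 (p f : nat) (mu : 'M[int]_(f, 3))
    (sec : 'M[rat]_(f, 3) -> 'M[int]_(f, 3)) :
  prime p -> (0 < f)%N ->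
  (forall om, inLW om -> overline (sec om) = om) ->
  forall l : 'M[int]_(f, 3),
    (exists (om' : 'M[rat]_(f, 3)) (A' : 'I_f -> Alc),
        inLWmu p mu om' /\ Trns p mu sec om' A' l)
    <->
    (exists l1, [/\ congr p l l1, X1 p l1, pregular p l1 & central p mu l1]).
Proof.
move=> _ _ Hsec l; split; [exact: dir1 | exact: dir2].
Qed.
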